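(* Let $r>c>\nu$ and $0<t<r-\nu$, set $R=(r-c)/(r-\nu)$, $\gamma=t/(r-\nu)$, fix $\rho\in[0,1)$, and for each integer $n\ge1$ let $L_n=\sqrt{n/(1+(n-1)\rho)}$ and let $Y_n$ be the unique real solution of $$R=\gamma\,\Phi(Y_n)+(1-\gamma)\,\Phi(L_nY_n),$$ with $\Phi$ the standard normal cdf. If $R>1/2$, then $0<Y_1<L_2Y_2<L_3Y_3<\dots<L_nY_n<\dots$. If $R<1/2$, then $0>Y_1>L_2Y_2>L_3Y_3>\dots>L_nY_n>\dots$.
   Context: $Y_n$ is the standardized optimal common order quantity of a transshipment coalition of $n$ identical newsvendors (selling price $r$, cost $c$, salvage value $\nu$, unit transportation cost $t$) facing jointly normal demands with common pairwise correlation $\rho$. Note $L_1=1$. The right-hand side of the defining equation is strictly increasing in $Y_n$ from $0$ to $1$, so $Y_n$ is well defined. *)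

(* Defs.v *)
From Stdlib Require Import Reals Lra.
Open Scope R_scope.

Definition std_normal_pdf (t : R) : R := exp (- (t * t) / 2) / sqrt (2 * PI).

Lemma std_normal_pdf_continuous : continuity std_normal_pdf.
Proof.
  unfold std_normal_pdf. intro x.
  apply continuity_pt_div.
  - apply continuity_pt_comp with (f1 := fun t => - (t * t) / 2).
    + reg.
    + apply derivable_continuous_pt, derivable_pt_exp.
  - apply continuity_pt_const. intros a b; reflexivity.
  - assert (0 < sqrt (2 * PI)) by (apply sqrt_lt_R0; pose proof PI_RGT_0; lra). lra.
Qed.

Lemma std_normal_pdf_integrable (x : R) : Riemann_integrable std_normal_pdf 0 x.
Proof.
  destruct (Rle_dec 0 x) as [H|H].
  - apply continuity_implies_RiemannInt; [exact H|].
    intros; apply std_normal_pdf_continuous.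
  - apply RiemannInt_P1, continuity_implies_RiemannInt; [lra|].
    intros; apply std_normal_pdf_continuous.
Qed.

(* Standard normal cdf: Phi x = 1/2 + int_0^x pdf (signed Riemann integral),
   which equals int_{-oo}^x pdf since int_{-oo}^0 pdf = 1/2. *)
Definition Phi (x : R) : R := / 2 + RiemannInt (std_normal_pdf_integrable x).

Definition Lcoef (rho : R) (n : nat) : R :=
  sqrt (INR n / (1 + (INR n - 1) * rho)).

(* Main.v *)
Require Import Defs.
From Stdlib Require Import Reals.
From Stdlib Require Import Lra Psatz.
Open Scope R_scope.

Lemma pdf_int (a b : R) : a <= b -> Riemann_integrable std_normal_pdf a b.
Proof. intro H. apply continuity_implies_RiemannInt; [exact H|].
  intros; apply std_normal_pdf_continuous. Qed.

Lemma Phi_0 : Phi 0 = / 2.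
Proof. unfold Phi. rewrite RiemannInt_P9. ring. Qed.

Lemma Phi_lt x y : x < y -> Phi x < Phi y.
Proof.
  intro Hxy. unfold Phi.
  set (M := Rabs x + Rabs y).
  set (m := exp (- (M * M) / 2) / sqrt (2 * PI)).
  assert (Hs : 0 < sqrt (2 * PI)) by (apply sqrt_lt_R0; pose proof PI_RGT_0; lra).
  assert (Hm : 0 < m) by (unfold m; apply Rdiv_lt_0_compat; [apply exp_pos|exact Hs]).
  pose proof (pdf_int x y (Rlt_le _ _ Hxy)) as pxy.
  assert (Hc : Riemann_integrable (fct_cte m) x y).
  { apply continuity_implies_RiemannInt; [lra|]. intros; apply continuity_const.
    intros a b; reflexivity. }
  assert (Hle : RiemannInt Hc <= RiemannInt pxy).
  { apply RiemannInt_P19; [lra|]. intros t Ht. unfold fct_cte, m, std_normal_pdf.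
    unfold Rdiv. apply Rmult_le_compat_r; [left; apply Rinv_0_lt_compat; exact Hs|].
    assert (t * t <= M * M).
    { unfold M. destruct (Rcase_abs x); destruct (Rcase_abs y);
      [rewrite (Rabs_left x), (Rabs_left y) | rewrite (Rabs_left x), (Rabs_right y)
      | rewrite (Rabs_right x), (Rabs_left y) | rewrite (Rabs_right x), (Rabs_right y)];
      try lra; nra. }
    destruct (Rle_lt_or_eq_dec _ _ H) as [H1|H1].
    - left. apply exp_increasing. lra.
    - rewrite H1. lra. }
  rewrite RiemannInt_P15 in Hle.
  rewrite <- (RiemannInt_P26 (std_normal_pdf_integrable x) pxy (std_normal_pdf_integrable y)).
  assert (0 < m * (y - x)) by (apply Rmult_lt_0_compat; lra).
  lra.
Qed.

Lemma Phi_le x y : x <= y -> Phi x <= Phi y.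
Proof. intros [H|H]; [left; apply Phi_lt; exact H | subst; lra]. Qed.

Lemma Lcoef_pos rho n : 0 <= rho -> (1 <= n)%nat -> 0 < Lcoef rho n.
Proof.
  intros Hr Hn. unfold Lcoef. apply sqrt_lt_R0.
  apply le_INR in Hn. simpl in Hn.
  apply Rdiv_lt_0_compat; nra.
Qed.

Lemma Lcoef_1 rho : Lcoef rho 1 = 1.
Proof. unfold Lcoef. simpl. replace (1 / (1 + (1 - 1) * rho)) with 1 by field. apply sqrt_1. Qed.

Lemma Lcoef_lt rho n : 0 <= rho -> rho < 1 -> (1 <= n)%nat -> Lcoef rho n < Lcoef rho (S n).
Proof.
  intros Hr Hr1 Hn. unfold Lcoef. rewrite S_INR.
  apply le_INR in Hn. simpl in Hn.
  assert (0 < 1 + (INR n - 1) * rho) by nra.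
  assert (0 < 1 + (INR n + 1 - 1) * rho) by nra.
  apply sqrt_lt_1.
  - left; apply Rdiv_lt_0_compat; lra.
  - left; apply Rdiv_lt_0_compat; lra.
  - apply (Rmult_lt_reg_r ((1 + (INR n - 1) * rho) * (1 + (INR n + 1 - 1) * rho)));
      [nra|].
    replace (INR n / (1 + (INR n - 1) * rho) * ((1 + (INR n - 1) * rho) * (1 + (INR n + 1 - 1) * rho)))
      with (INR n * (1 + (INR n + 1 - 1) * rho)) by (field; lra).
    replace ((INR n + 1) / (1 + (INR n + 1 - 1) * rho) * ((1 + (INR n - 1) * rho) * (1 + (INR n + 1 - 1) * rho)))
      with ((INR n + 1) * (1 + (INR n - 1) * rho)) by (field; lra).
    nra.
Qed.

Theorem theorem4 (r c nu t rho : R) (Y : nat -> R) :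
  r > c -> c > nu -> 0 < t -> t < r - nu ->
  0 <= rho -> rho < 1 ->
  (forall n : nat, (1 <= n)%nat ->
     (r - c) / (r - nu) =
       (t / (r - nu)) * Phi (Y n) + (1 - t / (r - nu)) * Phi (Lcoef rho n * Y n)) ->
  ((r - c) / (r - nu) > / 2 ->
     0 < Y 1%nat /\
     forall n : nat, (1 <= n)%nat ->
       Lcoef rho n * Y n < Lcoef rho (S n) * Y (S n)) /\
  ((r - c) / (r - nu) < / 2 ->
     0 > Y 1%nat /\
     forall n : nat, (1 <= n)%nat ->
       Lcoef rho n * Y n > Lcoef rho (S n) * Y (S n)).
Proof.
  intros Hrc Hcn Ht Htr Hr0 Hr1 Heq.
  set (RR := (r - c) / (r - nu)) in *.
  set (g := t / (r - nu)) in *.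
  assert (Hg : 0 < g) by (unfold g; apply Rdiv_lt_0_compat; lra).
  assert (Hg1 : g < 1) by (unfold g; apply (Rmult_lt_reg_r (r - nu)); [lra|];
    unfold Rdiv; rewrite Rmult_assoc, Rinv_l; lra).
  assert (HY : forall n, (1 <= n)%nat -> Y n = (Lcoef rho n * Y n) / Lcoef rho n).
  { intros n Hn. pose proof (Lcoef_pos rho n Hr0 Hn). field. lra. }
  assert (Hsign : forall n, (1 <= n)%nat ->
     (RR > /2 -> 0 < Lcoef rho n * Y n) /\ (RR < /2 -> Lcoef rho n * Y n < 0)).
  { intros n Hn. pose proof (Lcoef_pos rho n Hr0 Hn) as HL. pose proof (Heq n Hn) as E.
    split; intro HR.
    - destruct (Rlt_or_le 0 (Lcoef rho n * Y n)) as [H|H]; [exact H|].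
      assert (Y n <= 0) by nra.
      pose proof (Phi_le _ _ H) as P1. pose proof (Phi_le _ _ H0) as P2.
      rewrite Phi_0 in P1, P2. nra.
    - destruct (Rlt_or_le (Lcoef rho n * Y n) 0) as [H|H]; [exact H|].
      assert (0 <= Y n) by nra.
      pose proof (Phi_le _ _ H) as P1. pose proof (Phi_le _ _ H0) as P2.
      rewrite Phi_0 in P1, P2. nra. }
  assert (Hd : forall n, (1 <= n)%nat ->
     RR = g * Phi ((Lcoef rho n * Y n) / Lcoef rho n) + (1 - g) * Phi (Lcoef rho n * Y n)).
  { intros n Hn. rewrite <- HY by exact Hn. apply Heq. exact Hn. }
  split; intro HR.
  - split.
    + pose proof (proj1 (Hsign 1%nat (le_n 1)) HR). rewrite Lcoef_1 in H. lra.
    + intros n Hn.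
      assert (Hn1 : (1 <= S n)%nat) by lia.
      pose proof (proj1 (Hsign n Hn) HR) as Zp.
      pose proof (Lcoef_pos rho n Hr0 Hn) as Lp.
      pose proof (Lcoef_lt rho n Hr0 Hr1 Hn) as Llt.
      set (Z1 := Lcoef rho n * Y n) in *. set (Z2 := Lcoef rho (S n) * Y (S n)).
      destruct (Rlt_or_le Z1 Z2) as [H|H]; [exact H|]. exfalso.
      pose proof (Hd n Hn) as E1. pose proof (Hd (S n) Hn1) as E2. fold Z1 Z2 in E1, E2.
      assert (Hq : Z2 / Lcoef rho (S n) < Z1 / Lcoef rho n).
      { apply Rle_lt_trans with (Z1 / Lcoef rho (S n)).
        - unfold Rdiv; apply Rmult_le_compat_r; [left; apply Rinv_0_lt_compat; lra|exact H].
        - unfold Rdiv. apply Rmult_lt_compat_l; [exact Zp|]. apply Rinv_lt_contravar; nra. }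
      pose proof (Phi_lt _ _ Hq). pose proof (Phi_le _ _ H). nra.
  - split.
    + pose proof (proj2 (Hsign 1%nat (le_n 1)) HR). rewrite Lcoef_1 in H. lra.
    + intros n Hn.
      assert (Hn1 : (1 <= S n)%nat) by lia.
      pose proof (proj2 (Hsign n Hn) HR) as Zp.
      pose proof (Lcoef_pos rho n Hr0 Hn) as Lp.
      pose proof (Lcoef_lt rho n Hr0 Hr1 Hn) as Llt.
      set (Z1 := Lcoef rho n * Y n) in *. set (Z2 := Lcoef rho (S n) * Y (S n)).
      destruct (Rlt_or_le Z2 Z1) as [H|H]; [exact H|]. exfalso.
      pose proof (Hd n Hn) as E1. pose proof (Hd (S n) Hn1) as E2. fold Z1 Z2 in E1, E2.
      assert (Hq : Z1 / Lcoef rho n < Z2 / Lcoef rho (S n)).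
      { apply Rlt_le_trans with (Z1 / Lcoef rho (S n)).
        - unfold Rdiv. assert (/ Lcoef rho (S n) < / Lcoef rho n) by (apply Rinv_lt_contravar; nra).
          nra.
        - unfold Rdiv; apply Rmult_le_compat_r; [left; apply Rinv_0_lt_compat; lra|exact H]. }
      pose proof (Phi_lt _ _ Hq). pose proof (Phi_le _ _ H). nra.
Qed.
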